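(* Let $W=W(v_0;v_1,\dots,v_k)\subseteq K_n$ be a $k$-wheel with vertex set $V=V(W)\subseteq[1,n]$, and let $LT(W)$ be its leading tree. Then: (i) if $v_0=\min V$, then $\operatorname{val}_{LT(W)}(v_0)=k-1$; (ii) if $v_0=\max V$, then $\operatorname{val}_{LT(W)}(v_0)=1$; (iii) if $v_0\notin\{\min V,\max V\}$, then for all $i\in[1,k]$, $\operatorname{val}_{LT(W)}(v_i)=1$ if $v_i>v_0$ and $\operatorname{val}_{LT(W)}(v_i)=2$ if $v_i<v_0$. In this case, if $v_0$ is the $r$-th largest element of $V$ (so $r\in[2,k]$), then $\operatorname{val}_{LT(W)}(v_0)=r-1$.
   Context: For $k\ge 3$ and distinct vertices $v_0,\dots,v_k\in[1,n]$, the $k$-wheel $W(v_0;v_1,\dots,v_k)$ has radii $v_0v_i$ and chords $v_iv_{i+1}$ ($1\le i\le k$, $v_{k+1}=v_1$). A coupled tree of $W$ is a spanning tree $T\subseteq E(W)$ of $V(W)$ whose complement $E(W)\setminus T$ is also a spanning tree. Order the edges of $K_n$ totally by $12\succ13\succ\dots\succ1n\succ23\succ24\succ\dots\succ n{-}1\,n$ (for $a<b$, $c<d$: $ab\succ cd$ iff $a<c$, or $a=c$ and $b<d$). Extend to edge sets: $E\succ F$ iff $|E|>|F|$, or $|E|=|F|$ and the $\succ$-largest element of the symmetric difference $E\triangle F$ lies in $E$ (this is graded lexicographic order on the monomials $m_E$ with $m_{12}>m_{13}>\dots$). The leading tree $LT(W)$ is the $\succ$-largest coupled tree of $W$ (equivalently,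 the tree whose monomial is the leading term of the wheel's tree polynomial). $\operatorname{val}_T(v)$ is the number of edges of $T$ at $v$. *)

(* Defs.v *)
From mathcomp Require Import all_boot.
Set Implicit Arguments. Unset Strict Implicit. Unset Printing Implicit Defensive.

(* Vertices of K_n: the type 'I_n, where the ordinal i stands for the vertex
   i+1 of [1,n] (an order-preserving relabelling).  An edge {x,y} (x <> y) is
   stored as the normalized pair (min, max). *)

Section Wheel.
Variable n : nat.
Local Notation V := 'I_n.

Definition edge (x y : V) : V * V := if x < y then (x, y) else (y, x).

(* Wheel W(v0; v1..vk) with vs = [:: v1; ...; vk], k = size vs. *)
Definition wheel_vertices (v0 : V) (vs : seq V) : {set V} :=
  v0 |: [set v in vs].

Definition wheel_edges (v0 : V) (vs : seq V) : {set V * V} :=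
  [set edge v0 v | v in vs] :|:
  [set edge (nth v0 vs i) (nth v0 vs (i.+1 %% size vs)) | i : 'I_(size vs)].

Definition adj (T : {set V * V}) : rel V :=
  fun x y => (x != y) && (edge x y \in T).

Definition acyclic (T : {set V * V}) : Prop :=
  ~ exists s : seq V, [/\ 3 <= size s, uniq s & cycle (adj T) s].

Definition connected_on (U : {set V}) (T : {set V * V}) : Prop :=
  forall x y, x \in U -> y \in U -> connect (adj T) x y.

Definition spanning_tree (U : {set V}) (T : {set V * V}) : Prop :=
  [/\ (forall e, e \in T -> (e.1 \in U) && (e.2 \in U)),
      connected_on U T & acyclic T].

Definition coupled_tree (v0 : V) (vs : seq V) (T : {set V * V}) : Prop :=
  [/\ T \subset wheel_edges v0 vs,
      spanning_tree (wheel_vertices v0 vs) T &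
      spanning_tree (wheel_vertices v0 vs) (wheel_edges v0 vs :\: T)].

Definition edge_gt (e f : V * V) : bool :=
  (e.1 < f.1) || ((e.1 == f.1) && (e.2 < f.2)).

Definition eset_gt (E F : {set V * V}) : bool :=
  (#|F| < #|E|) ||
  ((#|E| == #|F|) && [exists e in E :\: F, forall f in F :\: E, edge_gt e f]).

Definition leading_tree (v0 : V) (vs : seq V) (T : {set V * V}) : Prop :=
  coupled_tree v0 vs T /\
  forall T', coupled_tree v0 vs T' -> T' != T -> eset_gt T T'.

Definition valency (T : {set V * V}) (v : V) : nat :=
  #|[set e in T | (e.1 == v) || (e.2 == v)]|.

End Wheel.

(* Main.v *)
Require Import Defs.
From mathcomp Require Import all_boot.
From mathcomp Require Import zify.

Set Implicit Arguments. Unset Strict Implicit. Unset Printing Implicit Defensive.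

Section Wh.
Variables (n : nat) (h : 'I_n) (vs : seq 'I_n).
Hypothesis Hk : 3 <= size vs.
Hypothesis Hu : uniq (h :: vs).

Local Notation k := (size vs).
Local Notation W := (wheel_edges h vs).
Local Notation U := (wheel_vertices h vs).

Definition c (i : nat) : 'I_n := nth h vs (i %% k).
Definition spoke (i : nat) := edge h (c i).
Definition rim (i : nat) := edge (c i) (c i.+1).

Lemma k_gt0 : 0 < k. Proof. by apply: leq_trans Hk. Qed.
Lemma h_notin : h \notin vs. Proof. by case/andP: Hu. Qed.
Lemma vs_uniq : uniq vs. Proof. by case/andP: Hu. Qed.

Lemma c_in i : c i \in vs. Proof. by rewrite /c mem_nth // ltn_pmod // k_gt0. Qed.
Lemma c_neq i : (c i == h) = false.
Proof. apply/negbTE; apply: contra h_notin => /eqP <-; exact: c_in. Qed.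
Lemma c_U i : c i \in U. Proof. by rewrite /wheel_vertices !inE c_in orbT. Qed.
Lemma h_U : h \in U. Proof. by rewrite /wheel_vertices !inE eqxx. Qed.

Lemma eqmD i j d : i %% k = j %% k -> (i + d) %% k = (j + d) %% k.
Proof. by move=> E; rewrite -modnDml E modnDml. Qed.
Lemma eqmDr i j d : (i + d) %% k = (j + d) %% k -> i %% k = j %% k.
Proof. move=> E. have := eqn_modDr d i j k. rewrite E eqxx. by move/esym/eqP. Qed.
Lemma eqmS i j : i %% k = j %% k -> i.+1 %% k = j.+1 %% k.
Proof. by rewrite -[i.+1]addn1 -[j.+1]addn1; apply: eqmD. Qed.
Lemma eqm_small i j : i < k -> j < k -> i %% k = j %% k -> i = j.
Proof. by move=> ik jk; rewrite !modn_small. Qed.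
Lemma predm i p : i.+1 %% k = p %% k -> i %% k = (p + k.-1) %% k.
Proof.
move=> E; apply: (@eqmDr _ _ 1); rewrite addn1 E.
have -> : p + k.-1 + 1 = p + k by have := k_gt0; lia.
by rewrite modnDr.
Qed.

Lemma c_eqmod i j : i %% k = j %% k -> c i = c j. Proof. by rewrite /c => ->. Qed.
Lemma c_addk i : c (i + k) = c i. Proof. by apply: c_eqmod; rewrite modnDr. Qed.
Lemma c_inj i j : c i = c j -> i %% k = j %% k.
Proof.
move=> /eqP; rewrite /c nth_uniq ?ltn_pmod ?vs_uniq ?k_gt0 //; by move/eqP.
Qed.
Lemma vs_c v : v \in vs -> exists2 i, i < k & v = c i.
Proof.
move=> vV; exists (index v vs); first by rewrite index_mem.
by rewrite /c modn_small ?index_mem // nth_index.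
Qed.

Lemma edge_sym (x y : 'I_n) : edge x y = edge y x.
Proof. by rewrite /edge; case: (ltngtP x y) => // /val_inj ->. Qed.
Lemma edge_eq (x y x' y' : 'I_n) : edge x y = edge x' y' ->
  (x = x' /\ y = y') \/ (x = y' /\ y = x').
Proof. by rewrite /edge; do 2 case: ifP => _; case=> -> ->; auto. Qed.
Lemma mem_edge (x y v : 'I_n) :
  ((edge x y).1 == v) || ((edge x y).2 == v) = (x == v) || (y == v).
Proof. by rewrite /edge; case: ifP => //= _; rewrite orbC. Qed.
Lemma edge_in (A : {pred 'I_n}) x y : x \in A -> y \in A ->
  ((edge x y).1 \in A) && ((edge x y).2 \in A).
Proof. by move=> hx hy; rewrite /edge; case: ifP => _ /=; rewrite hx hy. Qed.

Lemma spoke_eqmod i j : i %% k = j %% k -> spoke i = spoke j.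
Proof. by move=> E; rewrite /spoke (c_eqmod E). Qed.
Lemma rim_eqmod i j : i %% k = j %% k -> rim i = rim j.
Proof. by move=> E; rewrite /rim (c_eqmod E) (c_eqmod (eqmS E)). Qed.
Lemma spoke_inj i j : spoke i = spoke j -> i %% k = j %% k.
Proof.
by case/edge_eq=> [[_ /c_inj] //|[E _]]; move: (c_neq j); rewrite -E eqxx.
Qed.
Lemma rim_neq_spoke i j : rim i <> spoke j.
Proof.
by case/edge_eq=> [[E _]|[_ E]]; [move: (c_neq i)|move: (c_neq i.+1)]; rewrite E eqxx.
Qed.
Lemma rim_inj i j : rim i = rim j -> i %% k = j %% k.
Proof.
case/edge_eq=> [[E _]|[E1 E2]]; first exact: c_inj.
move/c_inj: E1 => E1; move/c_inj: E2 => E2.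
have E3 : (i + 2) %% k = (i + 0) %% k.
  rewrite addn0 addn2 E1; apply: eqmS; by rewrite -E2.
move/eqP: E3; rewrite eqn_modDl mod0n modn_small //.
Qed.

Lemma spoke_W i : spoke i \in W.
Proof. by rewrite /wheel_edges inE; apply/orP; left; apply/imsetP; exists (c i) => //; exact: c_in. Qed.
Lemma rim_W i : rim i \in W.
Proof.
rewrite /wheel_edges inE; apply/orP; right; apply/imsetP.
exists (Ordinal (ltn_pmod i k_gt0)) => //=.
rewrite /rim /c; congr edge; congr nth.
by rewrite -[i.+1]addn1 -modnDml addn1.
Qed.
Lemma W_cases e : e \in W -> exists2 i, i < k & (e = spoke i \/ e = rim i).
Proof.
case/setUP => /imsetP [x Hx ->].
  have [i ik ->] := vs_c Hx; exists i => //; by left.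
exists x => //; right; rewrite /rim /c (modn_small (ltn_ord x)).
by [].
Qed.

Lemma adj_c (G : {set 'I_n * 'I_n}) p w : G \subset W -> adj G (c p) w ->
  [\/ w = h /\ spoke p \in G, w = c p.+1 /\ rim p \in G |
      w = c (p + k.-1) /\ rim (p + k.-1) \in G].
Proof.
move=> sub /andP [Hne HG]; have [i ik [E|E]] := W_cases (subsetP sub _ HG);
  rewrite E in HG.
- case/edge_eq: E => [[E1 _]|[E1 E2]]; first by move: (c_neq p); rewrite E1 eqxx.
  by constructor 1; split => //; rewrite /spoke (c_eqmod (c_inj E1)).
- case/edge_eq: E => [[E1 E2]|[E1 E2]].
    have e1 := c_inj E1.
    by constructor 2; rewrite E2 (c_eqmod (eqmS e1)) /rim (c_eqmod e1) (c_eqmod (eqmS e1)).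
  have e1 := predm (esym (c_inj E1)).
  constructor 3; rewrite E2 (c_eqmod e1); split => //.
  by rewrite (rim_eqmod (esym e1)).
Qed.

Lemma adj_h (G : {set 'I_n * 'I_n}) w : G \subset W -> adj G h w ->
  exists2 i, i < k & (w = c i /\ spoke i \in G).
Proof.
move=> sub /andP [Hne HG]; have [i ik [E|E]] := W_cases (subsetP sub _ HG);
  rewrite E in HG.
- case/edge_eq: E => [[_ E2]|[E1 _]]; first by exists i => //; rewrite E2.
  by move: (c_neq i); rewrite -E1 eqxx.
- by case/edge_eq: E => [[E1 _]|[E1 _]]; [move: (c_neq i)|move: (c_neq i.+1)];
    rewrite -E1 eqxx.
Qed.

Lemma noconnect (e : rel 'I_n) (A : {pred 'I_n}) x y :
  (forall u w, u \in A -> e u w -> w \in A) -> x \in A -> y \notin A ->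
  ~~ connect e x y.
Proof.
move=> cl xA yA; apply/negP => /connectP [p pth E]; move: yA; rewrite E; clear E.
elim: p x xA pth => [|z p IH] x xA /=; first by rewrite xA.
by case/andP => exz pth; apply: IH (cl _ _ xA exz) pth.
Qed.

Lemma arc (G : {set 'I_n * 'I_n}) i L : G \subset W -> connected_on U G ->
  rim (i + k.-1) \notin G -> rim (i + L) \notin G ->
  (forall m, m <= L -> spoke (i + m) \notin G) -> False.
Proof.
move=> sub Hcon r1 r2 sp.
pose A := [pred v | [exists m : 'I_L.+1, v == c (i + m)]].
have cl : forall u w, u \in A -> adj G u w -> w \in A.
  move=> u w /existsP [m /eqP ->] /(adj_c sub) [[-> Hs]|[-> Hr]|[-> Hr]].
  - by move: (sp m); rewrite Hs -ltnS ltn_ord => /(_ isT).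
  - case: (ltnP m L) => mL.
      by apply/existsP; exists (Ordinal (mL : m.+1 < L.+1)); rewrite /= addnS.
    have mE : (m : nat) = L by have := ltn_ord m; lia.
    by move: Hr; rewrite mE (negbTE r2).
  - case: (posnP m) => m0.
      by move: Hr; rewrite m0 addn0 (negbTE r1).
    have mL : m.-1 < L.+1 by have := ltn_ord m; lia.
    apply/existsP; exists (Ordinal mL); rewrite /=.
    have -> : i + m + k.-1 = (i + m.-1) + k by have := k_gt0; lia.
    by rewrite c_addk.
have := Hcon (c i) h (c_U i) h_U; apply/negP; apply: noconnect cl _ _.
  by apply/existsP; exists ord0; rewrite addn0.
by apply/existsP => -[m /eqP E]; move: (c_neq (i + m)); rewrite -E eqxx.
Qed.

Lemma hub_G (G : {set 'I_n * 'I_n}) : G \subset W -> connected_on U G ->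
  exists2 i, i < k & spoke i \in G.
Proof.
move=> sub con; have := con h (c 0) h_U (c_U 0).
move/connectP => [[|w p] /= pth E]; first by move: (c_neq 0); rewrite -E eqxx.
by case/andP: pth => /(adj_h sub) [i ik [_ Hs]] _; exists i.
Qed.

Definition si (dir : bool) q := if dir then q.+1 else q + k.-1.
Definition ri (dir : bool) q := if dir then q else q + k.-1.

Section Lab.
Variable T : {set 'I_n * 'I_n}.
Hypothesis HT : coupled_tree h vs T.

Definition s i := spoke i \in T.
Definition t i := rim i \in T.

Lemma T_sub : T \subset W. Proof. by case: HT. Qed.
Lemma T_con : connected_on U T. Proof. by case: HT => _ [_ ? _]. Qed.
Lemma C_con : connected_on U (W :\: T). Proof. by case: HT => _ _ [_ ? _]. Qed.

Lemma arcX (X : bool) i L : t (i + k.-1) = X -> t (i + L) = X ->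
  (forall m, m <= L -> s (i + m) = X) -> False.
Proof.
case: X => r1 r2 sp.
- apply: (@arc (W :\: T) i L (subsetDl _ _) C_con).
  + by rewrite in_setD rim_W andbT negbK.
  + by rewrite in_setD rim_W andbT negbK.
  + by move=> m mL; rewrite in_setD spoke_W andbT negbK; apply: sp.
- apply: (@arc T i L T_sub T_con).
  + by rewrite /t in r1; rewrite r1.
  + by rewrite /t in r2; rewrite r2.
  + by move=> m mL; have := sp m mL; rewrite /s => ->.
Qed.

Lemma s_eqmod i j : i %% k = j %% k -> s i = s j.
Proof. by move=> E; rewrite /s (spoke_eqmod E). Qed.
Lemma t_eqmod i j : i %% k = j %% k -> t i = t j.
Proof. by move=> E; rewrite /t (rim_eqmod E). Qed.

Definition a i := s i == t (i + k.-1).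
Definition b i := s i == t i.
Lemma a_mod i : a (i %% k) = a i.
Proof. by rewrite /a (s_eqmod (modn_mod i k)) (t_eqmod (eqmD _ (modn_mod i k))). Qed.
Lemma b_mod i : b (i %% k) = b i.
Proof. by rewrite /b (s_eqmod (modn_mod i k)) (t_eqmod (modn_mod i k)). Qed.

Lemma deg i : ~~ (a i && b i).
Proof.
apply/negP => /andP [/eqP ai /eqP bi].
apply: (@arcX (s i) i 0); rewrite ?addn0 //.
by move=> m; rewrite leqn0 => /eqP ->; rewrite addn0.
Qed.

Lemma ind N : forall L i, L <= N -> 0 < L -> a i -> b (i + L) -> False.
Proof.
elim: N => [|N IH] L i LN L0 ai bL; first by lia.
case: (boolP (has (fun m => a (i + m) || b (i + m)) (iota 1 L.-1))).
  case/hasP => m; rewrite mem_iota => /andP [m1 mL] /orP [am|bm].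
    apply: (IH (L - m) (i + m)) => //; try lia.
    by have -> : i + m + (L - m) = i + L by lia.
  by apply: (IH m i) => //; lia.
move/hasPn => Hn.
have Hn' : forall m, 0 < m -> m < L -> ~~ a (i + m) /\ ~~ b (i + m).
  move=> m m0 mL; have H1 : m \in iota 1 L.-1 by rewrite mem_iota; apply/andP; split; lia.
  by have := Hn m H1; rewrite negb_or => /andP [].
have ti : t i = ~~ s i.
  have := deg i; rewrite ai /= /b; by case: (s i); case: (t i).
have tX : forall m, m < L -> t (i + m) = ~~ s i.
  elim => [|m IHm] mL; first by rewrite addn0.
  have [na nb] := Hn' m.+1 isT mL; move: na nb; rewrite /a /b.
  have -> : i + m.+1 + k.-1 = (i + m) + k by have := k_gt0; lia.
  rewrite (t_eqmod (modnDr _ _)) IHm; last by lia.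
  by move: (s (i + m.+1)) (t (i + m.+1)) (s i) => x y z; case: x; case: y; case: z.
have sX : forall m, m <= L -> s (i + m) = s i.
  move=> m mL; case: (posnP m) => [->|m0]; first by rewrite addn0.
  case: (ltnP m L) => mL'.
    have [_ nb] := Hn' m m0 mL'; move: nb; rewrite /b (tX m mL').
    by move: (s (i + m)) (s i) => x z; case: x; case: z.
  have -> : m = L by lia.
  have := deg (i + L); rewrite bL andbT /a.
  have -> : i + L + k.-1 = (i + L.-1) + k by have := k_gt0; lia.
  rewrite (t_eqmod (modnDr _ _)) (tX L.-1); last by lia.
  by move: (s (i + L)) (s i) => x z; case: x; case: z.
apply: (@arcX (s i) i L).
- by move: ai; rewrite /a => /eqP.
- by move: bL; rewrite /b => /eqP <-; apply: sX.
- exact: sX.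
Qed.

Lemma orient : exists dir, forall q, s (si dir q) != t (ri dir q).
Proof.
case: (boolP [exists q : 'I_k, a q]) => [/existsP [q aq] | /existsPn Na].
- exists false => j /=; apply/negP => /eqP E.
  have bj : b (j + k.-1) by rewrite /b E.
  rewrite -b_mod in bj.
  set x := (j + k.-1) %% k in bj.
  apply: (@ind (x + k - q) (x + k - q) q) => //.
    by have := ltn_ord q; lia.
  have -> : q + (x + k - q) = x + k by have := ltn_ord q; lia.
  by rewrite -b_mod modnDr modn_mod.
- exists true => q /=.
  have := Na (Ordinal (ltn_pmod q.+1 k_gt0)); rewrite /= a_mod /a.
  have -> : q.+1 + k.-1 = q + k by have := k_gt0; lia.
  by rewrite (t_eqmod (modnDr _ _)).
Qed.

End Lab.

Definition par (D : nat -> bool) q := if D (q %% k) then c q else h.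
Definition fedge dir (D : nat -> bool) q :=
  if D (q %% k) then rim (ri dir q) else spoke (si dir q).
Definition Tof dir D := [set fedge dir D (nat_of_ord i) | i : 'I_k].

Lemma rim_ri dir q : rim (ri dir q) = edge (c (si dir q)) (c q).
Proof.
case: dir => /=; first by rewrite /rim edge_sym.
rewrite /rim; have -> : (q + k.-1).+1 = q + k by have := k_gt0; lia.
by rewrite c_addk.
Qed.
Lemma fedge_par dir D q : fedge dir D q = edge (c (si dir q)) (par D q).
Proof.
by rewrite /fedge /par; case: ifP => _; [exact: rim_ri | rewrite /spoke edge_sym].
Qed.

Lemma si_eqmod dir i j : i %% k = j %% k -> si dir i %% k = si dir j %% k.
Proof. by case: dir => /= E; [apply: eqmS | apply: eqmD]. Qed.
Lemma ri_eqmod dir i j : i %% k = j %% k -> ri dir i %% k = ri dir j %% k.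
Proof. by case: dir => /= E //; apply: eqmD. Qed.
Lemma si_inj dir i j : si dir i %% k = si dir j %% k -> i %% k = j %% k.
Proof.
case: dir => /= E; last exact: eqmDr E.
by apply: (@eqmDr _ _ 1); rewrite !addn1.
Qed.
Lemma ri_inj dir i j : ri dir i %% k = ri dir j %% k -> i %% k = j %% k.
Proof. by case: dir => /= E //; exact: eqmDr E. Qed.
Lemma si_neq dir q : si dir q %% k != q %% k.
Proof.
case: dir => /=; apply/eqP => E.
- have : (q + 1) %% k = (q + 0) %% k by rewrite addn1 addn0.
  move/eqP; rewrite eqn_modDl mod0n modn_small //; lia.
- have : (q + k.-1) %% k = (q + 0) %% k by rewrite addn0.
  move/eqP; rewrite eqn_modDl mod0n modn_small; lia.
Qed.

Lemma fedge_mod dir D q : fedge dir D (q %% k) = fedge dir D q.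
Proof.
rewrite /fedge modn_mod; case: ifP => _;
  [apply: rim_eqmod; apply: ri_eqmod | apply: spoke_eqmod; apply: si_eqmod];
  exact: modn_mod.
Qed.
Lemma fedge_in dir D q : fedge dir D q \in Tof dir D.
Proof. by apply/imsetP; exists (Ordinal (ltn_pmod q k_gt0)) => //=; rewrite fedge_mod. Qed.
Lemma Tof_cases dir D e : e \in Tof dir D -> exists2 q, q < k & e = fedge dir D q.
Proof. by case/imsetP => q _ ->; exists q. Qed.
Lemma fedge_W dir D q : fedge dir D q \in W.
Proof. by rewrite /fedge; case: ifP => _; [exact: rim_W | exact: spoke_W]. Qed.
Lemma Tof_sub dir D : Tof dir D \subset W.
Proof. by apply/subsetP => e /Tof_cases [q _ ->]; exact: fedge_W. Qed.

Lemma fedge_eq dir D D' q q' : q < k -> q' < k ->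
  fedge dir D q = fedge dir D' q' -> q = q' /\ D q = D' q'.
Proof.
move=> qk qk'; rewrite /fedge !modn_small //.
case Dq: (D q); case Dq': (D' q') => E.
- by split => //; apply: eqm_small qk qk' (ri_inj (rim_inj E)).
- by case: (rim_neq_spoke E).
- by case: (rim_neq_spoke (esym E)).
- by split => //; apply: eqm_small qk qk' (si_inj (spoke_inj E)).
Qed.

Lemma card_Tof dir D : #|Tof dir D| = k.
Proof.
rewrite card_imset ?card_ord // => i j /(fedge_eq (ltn_ord i) (ltn_ord j)) [E _].
exact: val_inj.
Qed.

Definition qs dir i := if dir then (i + k.-1) %% k else i.+1 %% k.
Definition qr dir i := if dir then i %% k else i.+1 %% k.
Lemma qs_lt dir i : qs dir i < k. Proof. by case: dir; apply: ltn_pmod k_gt0. Qed.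
Lemma qr_lt dir i : qr dir i < k. Proof. by case: dir; apply: ltn_pmod k_gt0. Qed.
Lemma si_qs dir i : si dir (qs dir i) %% k = i %% k.
Proof.
case: dir => /=.
- rewrite -[((i + k.-1) %% k).+1]addn1 modnDml.
  have -> : i + k.-1 + 1 = i + k by have := k_gt0; lia.
  by rewrite modnDr.
- rewrite modnDml; have -> : i.+1 + k.-1 = i + k by have := k_gt0; lia.
  by rewrite modnDr.
Qed.
Lemma ri_qr dir i : ri dir (qr dir i) %% k = i %% k.
Proof.
case: dir => /=; first exact: modn_mod.
rewrite modnDml; have -> : i.+1 + k.-1 = i + k by have := k_gt0; lia.
by rewrite modnDr.
Qed.

Lemma rim_Tof dir D i : (rim i \in Tof dir D) = D (qr dir i).
Proof.
apply/idP/idP.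
- case/Tof_cases => q qk; rewrite /fedge (modn_small qk); case: ifP => Dq E;
    last by case: (rim_neq_spoke E).
  have E2 : ri dir (qr dir i) %% k = ri dir q %% k by rewrite ri_qr (rim_inj E).
  by move/ri_inj: E2; rewrite !modn_small ?qr_lt // => ->.
- move=> Dq; have := fedge_in dir D (qr dir i); rewrite /fedge modn_small ?qr_lt // Dq.
  by rewrite (rim_eqmod (ri_qr dir i)).
Qed.
Lemma spoke_Tof dir D i : (spoke i \in Tof dir D) = ~~ D (qs dir i).
Proof.
apply/idP/idP.
- case/Tof_cases => q qk; rewrite /fedge (modn_small qk); case: ifP => Dq E;
    first by case: (rim_neq_spoke (esym E)).
  have E2 : si dir (qs dir i) %% k = si dir q %% k by rewrite si_qs (spoke_inj E).
  by move/si_inj: E2; rewrite !modn_small ?qs_lt // => ->; rewrite Dq.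
- move=> Dq; have := fedge_in dir D (qs dir i); rewrite /fedge modn_small ?qs_lt //.
  by rewrite (negbTE Dq) (spoke_eqmod (si_qs dir i)).
Qed.

Lemma val_c (G : {set 'I_n * 'I_n}) p : G \subset W ->
  valency G (c p) = (spoke p \in G) + (rim p \in G) + (rim (p + k.-1) \in G).
Proof.
move=> sub.
have ck : c (p + k.-1).+1 = c p.
  have -> : (p + k.-1).+1 = p + k by have := k_gt0; lia.
  by rewrite c_addk.
have Hset : [set e in G | (e.1 == c p) || (e.2 == c p)] =
    [set e in [seq e <- [:: spoke p; rim p; rim (p + k.-1)] | e \in G]].
  apply/setP => e; rewrite !inE mem_filter.
  apply/idP/idP.
  - case/andP => eG; rewrite eG /=.
    have [i ik [E|E]] := W_cases (subsetP sub _ eG); rewrite E mem_edge.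
    + rewrite (eq_sym h) c_neq /= => /eqP/c_inj E1.
      by rewrite !inE (spoke_eqmod E1) eqxx.
    + case/orP => /eqP /c_inj E1.
        by rewrite !inE (rim_eqmod E1) eqxx orbT.
      by rewrite !inE (rim_eqmod (predm E1)) eqxx !orbT.
  - case/andP => eG; rewrite eG /= !inE => /or3P [] /eqP ->;
      rewrite /spoke /rim mem_edge ?ck eqxx ?orbT //.
have U3 : uniq [:: spoke p; rim p; rim (p + k.-1)].
  rewrite /= !inE !negb_or andbT -andbA; apply/and3P; split.
  - by apply/eqP => E; apply: (rim_neq_spoke (esym E)).
  - by apply/eqP => E; apply: (rim_neq_spoke (esym E)).
  - apply/eqP => /rim_inj E.
    have : (p + 0) %% k = (p + k.-1) %% k by rewrite addn0.
    move/eqP; rewrite eqn_modDl mod0n modn_small; lia.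
rewrite /valency Hset cardsE (card_uniqP _); last exact: filter_uniq.
by rewrite size_filter /= addn0 addnA.
Qed.

Lemma val_c_Tof dir D p : valency (Tof dir D) (c p) = (D (p %% k)).+1.
Proof.
rewrite val_c ?Tof_sub // rim_Tof spoke_Tof rim_Tof.
case: dir; rewrite /qs /qr /=.
- by move: (D ((p + k.-1) %% k)) (D (p %% k)) => x y; case: x; case: y.
- have -> : (p + k.-1).+1 = p + k by have := k_gt0; lia.
  rewrite modnDr.
  by move: (D (p.+1 %% k)) (D (p %% k)) => x y; case: x; case: y.
Qed.

Lemma val_h_Tof dir D : valency (Tof dir D) h = #|[set q : 'I_k | ~~ D q]|.
Proof.
rewrite /valency.
have -> : [set e in Tof dir D | (e.1 == h) || (e.2 == h)] =
    [set fedge dir D (nat_of_ord q) | q in [set q : 'I_k | ~~ D q]].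
  apply/setP => e; rewrite inE; apply/idP/idP.
  - case/andP => /imsetP [q _ ->]; rewrite fedge_par mem_edge c_neq /= /par modn_small //.
    case: ifP => Dq; first by rewrite c_neq.
    move=> _; apply/imsetP; exists q.
      by rewrite in_set Dq.
    by rewrite fedge_par /par modn_small // Dq.
  - case/imsetP => q; rewrite inE => Dq ->.
    by rewrite fedge_in fedge_par mem_edge /par modn_small // (negbTE Dq) eqxx orbT.
rewrite card_in_imset // => i j _ _ /(fedge_eq (ltn_ord i) (ltn_ord j)) [E _].
exact: val_inj.
Qed.

Lemma W_split dir D e : e \in W -> exists2 q, q < k &
  (e = fedge dir D q \/ e = fedge dir (fun x => ~~ D x) q).
Proof.
case/W_cases => i ik [->|->].
- exists (qs dir i); first exact: qs_lt.
  rewrite /fedge !modn_small ?qs_lt // (spoke_eqmod (si_qs dir i)).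
  by case: (D _); auto.
- exists (qr dir i); first exact: qr_lt.
  rewrite /fedge !modn_small ?qr_lt // (rim_eqmod (ri_qr dir i)).
  by case: (D _); auto.
Qed.

Lemma compl_Tof dir D : W :\: Tof dir D = Tof dir (fun x => ~~ D x).
Proof.
apply/setP => e; rewrite in_setD; apply/idP/idP.
- case/andP => nT eW; have [q qk [E|E]] := W_split dir D eW.
    by move: nT; rewrite E fedge_in.
  by rewrite E fedge_in.
- case/Tof_cases => q qk ->; rewrite fedge_W andbT; apply/negP.
  case/Tof_cases => q' qk' /(fedge_eq qk qk') [E1 E2].
  by move: E2; rewrite E1; case: (D q').
Qed.

Lemma adj_sym (G : {set 'I_n * 'I_n}) : symmetric (adj G).
Proof. by move=> x y; rewrite /adj eq_sym edge_sym. Qed.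

Lemma U_cases x : x \in U -> x = h \/ exists2 p, p < k & x = c p.
Proof. by rewrite /wheel_vertices !inE => /orP [/eqP ->|/vs_c]; auto. Qed.

Lemma iter_si dir j m : iter m (si dir) j = if dir then j + m else j + m * k.-1.
Proof.
elim: m => [|m IH] /=; first by case: dir; rewrite ?addn0 ?mul0n ?addn0.
rewrite IH; case: dir {IH} => /=; first by rewrite addnS.
by rewrite mulSn [k.-1 + _]addnC addnA.
Qed.

Lemma reach dir j p : j < k -> p < k -> exists d, c (iter d.+1 (si dir) j) = c p.
Proof.
move=> jk pk; case: dir.
- exists (p + k - j).-1; rewrite iter_si /=; apply: c_eqmod.
  have -> : j + (p + k - j).-1.+1 = p + k by lia.
  by rewrite modnDr.
- exists (j + k - p).-1; rewrite iter_si /=; apply: c_eqmod.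
  set m := (j + k - p).-1.+1.
  apply: (@eqmDr _ _ m).
  have -> : j + m * k.-1 + m = m * k + j.
    by rewrite -addnA -mulnSr prednK ?k_gt0 // addnC.
  have -> : p + m = j + k by rewrite /m; lia.
  by rewrite modnMDl modnDr.
Qed.

Lemma Tof_conn dir D j : j < k -> ~~ D j -> connected_on U (Tof dir D).
Proof.
move=> jk Dj.
have step : forall q, connect (adj (Tof dir D)) (par D q) h ->
    connect (adj (Tof dir D)) (c (si dir q)) h.
  move=> q H; apply: connect_trans H; apply: connect1.
  rewrite /adj -fedge_par fedge_in andbT.
  rewrite /par; case: ifP => _; last by rewrite c_neq.
  apply/eqP => /c_inj E; by move: (si_neq dir q); rewrite E eqxx.
have toh : forall d, connect (adj (Tof dir D)) (c (iter d.+1 (si dir) j)) h.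
  elim => [|d IH]; apply: step.
    by rewrite /par modn_small // (negbTE Dj); exact: connect0.
  by rewrite /par; case: ifP => _ //; exact: connect0.
have toh' : forall x, x \in U -> connect (adj (Tof dir D)) x h.
  move=> x /U_cases [->|[p pk ->]]; first exact: connect0.
  by have [d <-] := reach dir jk pk; exact: toh.
move=> x y xU yU; apply: connect_trans (toh' x xU) _.
by rewrite (sym_connect_sym (adj_sym _)); exact: toh'.
Qed.

Definition dist (dir : bool) j p :=
  if dir then (if j < p then p - j.+1 else p + k - j.+1)
  else (if p < j then j.-1 - p else j + k.-1 - p).

Lemma dist_si dir j q : j < k -> q < k -> q != j ->
  dist dir j (si dir q %% k) = (dist dir j q).+1.
Proof.
move=> jk qk /eqP qj; case: dir => /=.
- case: (ltnP q.+1 k) => H.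
    rewrite modn_small // /dist /=.
    by case: (ltnP j q.+1) => H1; case: (ltnP j q) => H2; lia.
  have -> : q.+1 = k by lia.
  rewrite modnn /dist /=.
  by case: (ltnP j 0) => H1; case: (ltnP j q) => H2; lia.
- case: (posnP q) => q0.
    rewrite q0 add0n modn_small; last by have := k_gt0; lia.
    rewrite /dist /=.
    by case: (ltnP k.-1 j) => H1; case: (ltnP 0 j) => H2; lia.
  have -> : q + k.-1 = q.-1 + k by have := k_gt0; lia.
  rewrite modnDr modn_small; last by lia.
  rewrite /dist /=.
  by case: (ltnP q.-1 j) => H1; case: (ltnP q j) => H2; lia.
Qed.

Definition phi dir j (v : 'I_n) := if v == h then 0 else (dist dir j (index v vs)).+1.
Lemma index_c p : index (c p) vs = p %% k.
Proof. by rewrite /c index_uniq ?ltn_pmod ?k_gt0 ?vs_uniq. Qed.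
Lemma phi_c dir j p : phi dir j (c p) = (dist dir j (p %% k)).+1.
Proof. by rewrite /phi c_neq index_c. Qed.

Lemma phi_par dir D j q : j < k -> ~~ D j -> q < k ->
  phi dir j (par D q) < phi dir j (c (si dir q)).
Proof.
move=> jk Dj qk; rewrite /par modn_small //; case: ifP => Dq.
  rewrite !phi_c (modn_small qk) (dist_si dir jk qk) //.
  by apply/eqP => E; move: Dj; rewrite -E Dq.
by rewrite phi_c /phi eqxx.
Qed.

Lemma adj_Tof dir D y z : adj (Tof dir D) y z -> exists2 q, q < k &
  (y = c (si dir q) /\ z = par D q) \/ (y = par D q /\ z = c (si dir q)).
Proof. by case/andP => _ /Tof_cases [q qk]; rewrite fedge_par => /edge_eq E; exists q. Qed.

Lemma seq_max (f : 'I_n -> nat) (s : seq 'I_n) : s != [::] ->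
  exists2 y, y \in s & forall z, z \in s -> f z <= f y.
Proof.
elim: s => // x s IH _; case: (eqVneq s [::]) => [-> | sn].
  by exists x; rewrite ?inE ?eqxx // => z; rewrite inE => /eqP ->.
have [y ys Hy] := IH sn; case: (leqP (f x) (f y)) => H.
  exists y; first by rewrite inE ys orbT.
  by move=> z; rewrite inE => /orP [/eqP ->|/Hy].
exists x; first by rewrite inE eqxx.
move=> z; rewrite inE => /orP [/eqP -> //|/Hy H']; exact: leq_trans H' (ltnW H).
Qed.

Lemma next_prev_neq (s : seq 'I_n) y : uniq s -> 2 < size s -> y \in s ->
  next s y != prev s y.
Proof.
move=> us sz ys; apply/eqP => E.
have H : next s (next s y) = y by rewrite {1}E next_prev.
case/rot_to: ys => i p Hr.
have us' : uniq (y :: p) by rewrite -Hr rot_uniq.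
have sz' : 2 < size (y :: p) by rewrite -Hr size_rot.
rewrite -!(next_rot i us) Hr in H; clear Hr.
case: p us' sz' H => [|z1 [|z2 p]] //= us' _.
rewrite eqxx.
case: (z1 =P y) => [E1|_]; first by move: us'; rewrite E1 inE eqxx.
rewrite eqxx => E2; move: us'; rewrite E2 !inE eqxx orbT.
by [].
Qed.

Lemma Tof_acyc dir D j : j < k -> ~~ D j -> acyclic (Tof dir D).
Proof.
move=> jk Dj [s [sz us cyc]].
have sn : s != [::] by case: s sz cyc us.
have [y ys Hy] := @seq_max (phi dir j) s sn.
have child : forall z, z \in s -> adj (Tof dir D) y z ->
    exists2 q, q < k & y = c (si dir q) /\ z = par D q.
  move=> z zs /adj_Tof [q qk [E|[E1 E2]]]; first by exists q.
  have := Hy z zs; rewrite E1 E2 => H1; have := phi_par dir jk Dj qk; lia.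
have m1 : next s y \in s by rewrite mem_next.
have m2 : prev s y \in s by rewrite mem_prev.
have a2 : adj (Tof dir D) y (prev s y) by rewrite adj_sym; exact: prev_cycle cyc ys.
have [q qk [Ey Ex]] := child _ m1 (next_cycle cyc ys).
have [q' qk' [Ey' Ew]] := child _ m2 a2.
have qq : q = q'.
  apply: eqm_small qk qk' _; apply: (@si_inj dir); apply: c_inj.
  by rewrite -Ey -Ey'.
by have := next_prev_neq us sz ys; rewrite Ex Ew qq eqxx.
Qed.

Lemma Tof_span (dir : bool) (D : nat -> bool) : (exists2 j, j < k & ~~ D j) -> spanning_tree U (Tof dir D).
Proof.
case=> j jk Dj; split; [| exact: Tof_conn jk Dj | exact: Tof_acyc jk Dj].
move=> e /(subsetP (Tof_sub dir D)) /W_cases [i _ [->|->]];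
  rewrite /spoke /rim; apply: edge_in; rewrite ?h_U ?c_U //.
Qed.

Lemma coupled_Tof (dir : bool) (D : nat -> bool) : (exists2 j, j < k & D j) -> (exists2 j, j < k & ~~ D j) ->
  coupled_tree h vs (Tof dir D).
Proof.
move=> [j jk Dj] H2; split; [exact: Tof_sub | exact: Tof_span H2 |].
by rewrite compl_Tof; apply: Tof_span; exists j => //; rewrite negbK.
Qed.

Lemma structure T : coupled_tree h vs T -> exists dir D,
  [/\ T = Tof dir D, (exists2 j, j < k & D j) & (exists2 j, j < k & ~~ D j)].
Proof.
move=> HT; have [dir O] := orient HT.
pose D := fun q => t T (ri dir q).
have TE : T = Tof dir D.
  apply/setP => e; apply/idP/idP.
  - move=> eT; have [q qk [E|E]] := W_split dir D (subsetP (T_sub HT) _ eT).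
      by rewrite E fedge_in.
    move: eT (O q); rewrite E /fedge modn_small // /D /s /t.
    case: ifP => Ht eT Oq; first by move: Ht; rewrite eT.
    by move: Ht Oq; rewrite eT => /negbFE ->.
  - case/Tof_cases => q qk ->; rewrite /fedge modn_small // /D.
    case: ifP => Ht; first exact: Ht.
    by have := O q; rewrite Ht /s; case: (spoke _ \in T).
have [i ik Hi] := hub_G (T_sub HT) (T_con HT).
have [i' ik' Hi'] := hub_G (subsetDl W T) (C_con HT).
exists dir, D; split => //.
- exists (qs dir i'); first exact: qs_lt.
  by move: Hi'; rewrite in_setD spoke_W andbT TE spoke_Tof negbK.
- exists (qs dir i); first exact: qs_lt.
  by rewrite -spoke_Tof -TE.
Qed.

Lemma egt (y a b : 'I_n) : a < b -> y != a -> y != b -> edge_gt (edge y a) (edge y b).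
Proof.
move=> ab ya yb; rewrite /edge_gt /edge.
move: ya yb; rewrite -!(inj_eq (@ord_inj n)) => ya yb.
by case: ifP => H1; case: ifP => H2 /=; rewrite -?(inj_eq (@ord_inj n)) /=; lia.
Qed.

Definition rk (e : 'I_n * 'I_n) := e.1 * n + e.2.
Lemma rk_gt e f : edge_gt e f = (rk e < rk f).
Proof.
case: e f => [a1 a2] [b1 b2]; rewrite /edge_gt /rk /= -(inj_eq (@ord_inj n)).
have := ltn_ord a2; have := ltn_ord b2.
move: (a1 : nat) (a2 : nat) (b1 : nat) (b2 : nat) => x1 x2 y1 y2 H1 H2.
apply/idP/idP.
- case/orP => [H|/andP [/eqP -> H]]; last by lia.
  have : x1.+1 * n <= y1 * n by rewrite leq_mul2r H orbT.
  rewrite mulSn; lia.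
- move=> H; case: (ltngtP x1 y1) => H3 //=.
    have : y1.+1 * n <= x1 * n by rewrite leq_mul2r H3 orbT.
    rewrite mulSn; lia.
  by move: H; rewrite H3 /= ?eqxx /=; lia.
Qed.

Lemma eset_asym (E F : {set 'I_n * 'I_n}) : eset_gt E F -> eset_gt F E -> False.
Proof.
rewrite /eset_gt => /orP [H1|/andP [/eqP H1 /existsP [e /andP [He Hall]]]]
  /orP [H2|/andP [/eqP H2 /existsP [f /andP [Hf Hall2]]]]; try lia.
have := forallP Hall f; rewrite Hf /= => g1.
have := forallP Hall2 e; rewrite He /= => g2.
by move: g1 g2; rewrite !rk_gt; lia.
Qed.

Lemma csi_neq dir q : c (si dir q) != c q.
Proof. by apply/eqP => /c_inj E; move: (si_neq dir q); rewrite E eqxx. Qed.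

Lemma LT_fixed T (dir : bool) (D D' : nat -> bool) : leading_tree h vs T -> T = Tof dir D ->
  (exists2 j, j < k & D' j) -> (exists2 j, j < k & ~~ D' j) ->
  (forall q, q < k -> D' q -> ~~ D q -> c q < h) ->
  (forall q, q < k -> D q -> ~~ D' q -> h < c q) ->
  forall q, q < k -> D q = D' q.
Proof.
move=> [_ LT] TE v1 v2 C1 C2 q0 q0k; subst T.
apply/eqP/negPn/negP => Hne.
have gin : forall q, q < k -> D q != D' q ->
    fedge dir D' q \in Tof dir D' :\: Tof dir D.
  move=> q qk Hq; rewrite in_setD fedge_in andbT; apply/negP.
  case/Tof_cases => q' qk' /(fedge_eq qk qk') [E1 E2]; subst q'.
  by move: Hq; rewrite E2 eqxx.
have g0 := gin q0 q0k Hne.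
have neq : Tof dir D' != Tof dir D.
  by apply/eqP => E; move: g0; rewrite E setDv inE.
have := LT _ (coupled_Tof dir v1 v2) neq.
apply: eset_asym.
rewrite /eset_gt !card_Tof ltnn eqxx /=.
apply/existsP.
case: (@arg_minnP _ (fedge dir D' q0) (fun x => x \in Tof dir D' :\: Tof dir D) rk g0)
  => e He Hmin.
exists e; rewrite He /=; apply/forallP => f; apply/implyP => Hf.
move: Hf; rewrite in_setD => /andP [nT' fT].
have [q qk Ef] := Tof_cases fT.
have Hq : D q != D' q.
  apply/negP => /eqP Eq; move: nT'; rewrite Ef.
  have -> : fedge dir D q = fedge dir D' q by rewrite /fedge modn_small // Eq.
  by rewrite fedge_in.
have gq := gin q qk Hq.
have lt1 : rk (fedge dir D' q) < rk f.
  rewrite -rk_gt Ef !fedge_par /par !modn_small //.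
  move: Hq; case Dq: (D q); case Dq': (D' q) => // _.
  - apply: egt; rewrite ?c_neq //.
      by apply: C2 => //; rewrite ?Dq ?Dq'.
    exact: csi_neq.
  - apply: egt; rewrite ?c_neq ?csi_neq //.
    by apply: C1 => //; rewrite ?Dq ?Dq'.
have H := Hmin _ gq; rewrite rk_gt; exact: leq_ltn_trans H lt1.
Qed.

Lemma c_ne_nat q : (h : nat) <> c q.
Proof. by move=> E; move: (c_neq q); rewrite (ord_inj E) eqxx. Qed.

Lemma main T : leading_tree h vs T ->
  [/\ (forall v, v \in wheel_vertices h vs -> h <= v) ->
        valency T h = (size vs).-1,
      (forall v, v \in wheel_vertices h vs -> v <= h) ->
        valency T h = 1 &
      (exists2 a, a \in vs & a < h) -> (exists2 b, b \in vs & h < b) ->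
        (forall i, i < size vs ->
           (h < nth h vs i -> valency T (nth h vs i) = 1) /\
           (nth h vs i < h -> valency T (nth h vs i) = 2)) /\
        (forall r, r = #|[set v in wheel_vertices h vs | h <= v]| ->
           valency T h = r - 1)].
Proof.
move=> LT; have [cT _] := LT.
have [dir [D [TE v1 v2]]] := structure cT.
have vh : valency T h = #|[set q : 'I_k | ~~ D q]| by rewrite TE val_h_Tof.
split.
- move=> Hmin; have [j jk Dj] := v1.
  have Eq := @LT_fixed T dir D (fun q => q == j) LT TE.
  have {}Eq : forall q, q < k -> D q = (q == j).
    apply: Eq.
    + by exists j.
    + exists (j.+1 %% k); first exact: ltn_pmod k_gt0.
      apply/eqP => E; move: E; case: (ltnP j.+1 k) => H.
        by rewrite modn_small //; lia.
      have -> : j.+1 = k by lia.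
      by rewrite modnn; lia.
    + by move=> q qk /eqP ->; rewrite Dj.
    + move=> q qk _ _; have := Hmin (c q) (c_U q); have := @c_ne_nat q; lia.
  rewrite vh.
  have -> : [set q : 'I_k | ~~ D q] = [set~ Ordinal jk].
    by apply/setP => q; rewrite !inE (Eq q (ltn_ord q)).
  by rewrite cardsC1 card_ord.
- move=> Hmax; have [j jk Dj] := v2.
  have Eq := @LT_fixed T dir D (fun q => q != j) LT TE.
  have {}Eq : forall q, q < k -> D q = (q != j).
    apply: Eq.
    + exists (j.+1 %% k); first exact: ltn_pmod k_gt0.
      apply/eqP => E; move: E; case: (ltnP j.+1 k) => H.
        by rewrite modn_small //; lia.
      have -> : j.+1 = k by lia.
      by rewrite modnn; lia.
    + by exists j => //; rewrite negbK.
    + move=> q qk _ _; have := Hmax (c q) (c_U q); have := @c_ne_nat q; lia.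
    + by move=> q qk Dq; rewrite negbK => /eqP E; move: Dj; rewrite -E Dq.
  rewrite vh.
  have -> : [set q : 'I_k | ~~ D q] = [set Ordinal jk].
    by apply/setP => q; rewrite !inE (Eq q (ltn_ord q)) negbK.
  by rewrite cards1.
- move=> [a aV aLt] [b bV bLt].
  have Eq := @LT_fixed T dir D (fun q => c q < h) LT TE.
  have {}Eq : forall q, q < k -> D q = (c q < h).
    apply: Eq.
    + by have [ia iak Ea] := vs_c aV; exists ia => //; rewrite -Ea.
    + have [ib ibk Eb] := vs_c bV; exists ib => //; rewrite -Eb -leqNgt.
      exact: ltnW.
    + by move=> q _ H _.
    + move=> q _ _; rewrite -leqNgt; have := @c_ne_nat q; lia.
  split.
  + move=> i ik; have ci : nth h vs i = c i by rewrite /c modn_small.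
    rewrite ci TE val_c_Tof modn_small // (Eq i ik).
    split => H; last by rewrite H.
    have -> : (c i < h) = false by apply/negbTE; rewrite -leqNgt; exact: ltnW.
    by [].
  + move=> r ->; rewrite vh.
    have -> : [set q : 'I_k | ~~ D q] = [set q : 'I_k | h <= c q].
      by apply/setP => q; rewrite !inE (Eq q (ltn_ord q)) -leqNgt.
    have -> : [set v in wheel_vertices h vs | h <= v] =
        h |: [set c (nat_of_ord q) | q in [set q : 'I_k | h <= c q]].
      apply/setP => v; rewrite /wheel_vertices !inE.
      case: (v =P h) => [->|nvh] /=; first by rewrite leqnn.
      apply/idP/idP.
      * case/andP => /vs_c [q qk ->] H; apply/imsetP; exists (Ordinal qk) => //.
        by rewrite inE.
      * by case/imsetP => q; rewrite inE => H ->; rewrite c_in H.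
    rewrite cardsU1 card_imset.
      have -> : h \notin [set c (nat_of_ord q) | q in [set q : 'I_k | h <= c q]].
        by apply/imsetP => -[q _ E]; move: (c_neq q); rewrite -E eqxx.
      by rewrite add1n subn1.
    move=> x y /c_inj E; apply: ord_inj; exact: eqm_small (ltn_ord x) (ltn_ord y) E.
Qed.

End Wh.

Theorem proposition4p1 (n : nat) (v0 : 'I_n) (vs : seq 'I_n) (T : {set 'I_n * 'I_n}) :
  3 <= size vs -> uniq (v0 :: vs) ->
  leading_tree v0 vs T ->
  [/\ (forall v, v \in wheel_vertices v0 vs -> v0 <= v) ->
        valency T v0 = (size vs).-1,
      (forall v, v \in wheel_vertices v0 vs -> v <= v0) ->
        valency T v0 = 1 &
      (exists2 a, a \in vs & a < v0) -> (exists2 b, b \in vs & v0 < b) ->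
        (forall i, i < size vs ->
           (v0 < nth v0 vs i -> valency T (nth v0 vs i) = 1) /\
           (nth v0 vs i < v0 -> valency T (nth v0 vs i) = 2)) /\
        (forall r, r = #|[set v in wheel_vertices v0 vs | v0 <= v]| ->
           valency T v0 = r - 1)].
Proof. by move=> Hk Hu; apply: main. Qed.
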